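(* Let $M$ and $N$ be non-trivial $0$-left cancellative monoids with zero. Then their $0$-free product $M*_0N$ is $0$-left cancellative. Dually, if $M$ and $N$ are non-trivial $0$-right cancellative monoids, then $M*_0N$ is $0$-right cancellative.
   Context: A monoid with zero is non-trivial if $0\neq1$. $0$-left cancellative: $st=sr\neq0\Rightarrow t=r$; $0$-right cancellative: $ts=rs\neq0\Rightarrow t=r$. The $0$-free product $M*_0N$ is the coproduct of $M$ and $N$ in the category of monoids with zero and zero-preserving homomorphisms; equivalently it is the Rees quotient $(M*N)/I$ of the monoid free product $M*N$ by the ideal $I$ generated by the zeros of $M$ and $N$. *)

(* Defs.v *)
Set Implicit Arguments.
Unset Strict Implicit.

Record monoid0 := Monoid0 {
  car :> Type;
  mul : car -> car -> car;
  one : car;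
  zero : car;
  mulA : forall x y z, mul x (mul y z) = mul (mul x y) z;
  mul1l : forall x, mul one x = x;
  mul1r : forall x, mul x one = x;
  mul0l : forall x, mul zero x = zero;
  mul0r : forall x, mul x zero = zero
}.

Arguments mul {m} _ _.
Arguments one {m}.
Arguments zero {m}.

Definition nontrivial (M : monoid0) : Prop := (zero : M) <> one.

Definition zero_left_cancellative (M : monoid0) : Prop :=
  forall s t r : M, mul s t = mul s r -> mul s t <> zero -> t = r.

Definition zero_right_cancellative (M : monoid0) : Prop :=
  forall s t r : M, mul t s = mul r s -> mul t s <> zero -> t = r.

Definition hom0 (M N : monoid0) (f : M -> N) : Prop :=
  (forall x y : M, f (mul x y) = mul (f x) (f y)) /\ f one = one /\ f zero = zero.

Definition is_zero_free_product (M N P : monoid0) (iM : M -> P) (iN : N -> P)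
  : Prop :=
  hom0 iM /\ hom0 iN /\
  forall (Q : monoid0) (f : M -> Q) (g : N -> Q), hom0 f -> hom0 g ->
    exists! h : P -> Q,
      hom0 h /\ (forall m : M, h (iM m) = f m) /\ (forall n : N, h (iN n) = g n).

(* Main.v *)
Require Import Defs.
From Stdlib Require Import List ClassicalEpsilon ProofIrrelevance FunctionalExtensionality.
Import ListNotations.

Definition dec {T : Type} (x y : T) : {x = y} + {x <> y} := excluded_middle_informative (x = y).

Lemma sig_eq (T : Type) (Pr : T -> Prop) (x y : sig Pr) : proj1_sig x = proj1_sig y -> x = y.
Proof. destruct x as [x hx], y as [y hy]; simpl; intros ->. f_equal; apply proof_irrelevance. Qed.

Section Gen.
Variable A : monoid0.
Variable L : Type.
Variable emb : A -> L.
Variable proj : L -> option A.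
Hypothesis projemb : forall a, proj (emb a) = Some a.
Hypothesis embproj : forall y a, proj y = Some a -> y = emb a.
Hypothesis nt : (zero : A) <> one.

Definition headok (w : list L) : Prop := match w with y :: _ => proj y = None | [] => True end.

Definition step (a : A) (w : list L) : option (list L) :=
  if dec a zero then None else if dec a one then Some w else
  match w with
  | y :: w' => match proj y with
     | Some a' => if dec (mul a a') zero then None
                  else if dec (mul a a') one then Some w'
                  else Some (emb (mul a a') :: w')
     | None => Some (emb a :: w) end
  | [] => Some (emb a :: w) end.

Definition stepO a (o : option (list L)) := match o with None => None | Some w => step a w end.

Lemma step_0 w : step zero w = None.
Proof. unfold step; destruct (dec zero zero); congruence. Qed.
Lemma step_1 w : step one w = Some w.
Proof. unfold step; destruct (dec one zero); [congruence|]. destruct (dec one one); congruence. Qed.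
Lemma step_nomerge a w : a <> zero -> a <> one -> headok w -> step a w = Some (emb a :: w).
Proof.
  intros h0 h1 hw; unfold step; destruct (dec a zero); [congruence|]; destruct (dec a one); [congruence|].
  destruct w as [|y w]; simpl in *; [reflexivity|]. rewrite hw; reflexivity.
Qed.
Lemma step_m0 a y w c : a <> zero -> a <> one -> proj y = Some c -> mul a c = zero -> step a (y :: w) = None.
Proof.
  intros h0 h1 hy e; unfold step; destruct (dec a zero); [congruence|]; destruct (dec a one); [congruence|].
  rewrite hy. destruct (dec (mul a c) zero); congruence.
Qed.
Lemma step_m1 a y w c : a <> zero -> a <> one -> proj y = Some c -> mul a c = one -> step a (y :: w) = Some w.
Proof.
  intros h0 h1 hy e; unfold step; destruct (dec a zero); [congruence|]; destruct (dec a one); [congruence|].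
  rewrite hy. destruct (dec (mul a c) zero); [congruence|]. destruct (dec (mul a c) one); congruence.
Qed.
Lemma step_mp a y w c : a <> zero -> a <> one -> proj y = Some c -> mul a c <> zero -> mul a c <> one ->
  step a (y :: w) = Some (emb (mul a c) :: w).
Proof.
  intros h0 h1 hy e e'; unfold step; destruct (dec a zero); [congruence|]; destruct (dec a one); [congruence|].
  rewrite hy. destruct (dec (mul a c) zero); [congruence|]. destruct (dec (mul a c) one); congruence.
Qed.

Lemma head_cases w : headok w \/ exists y w' c, w = y :: w' /\ proj y = Some c.
Proof. destruct w as [|y w]; simpl; auto. destruct (proj y) eqn:E; [right; eauto 6|left; reflexivity]. Qed.

Lemma emb_inj a b : emb a = emb b -> a = b.
Proof. intro e. apply (f_equal proj) in e. rewrite !projemb in e. congruence. Qed.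

Variable nf : list L -> Prop.
Hypothesis H1 : forall y w a, nf (y :: w) -> proj y = Some a -> a <> zero /\ a <> one /\ nf w /\ headok w.
Hypothesis H2 : forall a w, a <> zero -> a <> one -> nf w -> headok w -> nf (emb a :: w).

Definition nfo (o : option (list L)) := match o with None => True | Some w => nf w end.

Lemma step_nf a w : nf w -> nfo (step a w).
Proof.
  intro Hw. unfold step.
  destruct (dec a zero); simpl; auto.
  destruct (dec a one); simpl; auto.
  destruct w as [|y w'].
  - apply H2; simpl; auto.
  - destruct (proj y) as [s|] eqn:E.
    + destruct (H1 _ _ _ Hw E) as (?&?&?&?).
      destruct (dec (mul a s) zero); simpl; auto.
      destruct (dec (mul a s) one); simpl; auto.
    + apply H2; simpl; auto.
Qed.

Lemma step_comp a b w : nf w -> stepO a (step b w) = step (mul a b) w.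
Proof.
  intro Hw.
  destruct (dec b zero) as [->|b0]. { rewrite step_0, mul0r, step_0. reflexivity. }
  destruct (dec b one) as [->|b1]. { rewrite step_1, mul1r. reflexivity. }
  destruct (head_cases w) as [hw | (y & u & c & -> & hy)].
  - rewrite (step_nomerge b w) by auto; simpl.
    destruct (dec a zero) as [->|a0]. { rewrite step_0, mul0l, step_0. reflexivity. }
    destruct (dec a one) as [->|a1]. { rewrite step_1, mul1l, step_nomerge by auto. reflexivity. }
    destruct (dec (mul a b) zero) as [e|e0].
    { rewrite (step_m0 a (emb b) w b) by auto. rewrite e, step_0. reflexivity. }
    destruct (dec (mul a b) one) as [e|e1].
    { rewrite (step_m1 a (emb b) w b) by auto. rewrite e, step_1. reflexivity. }
    rewrite (step_mp a (emb b) w b) by auto. rewrite step_nomerge by auto. reflexivity.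
  - destruct (H1 _ _ _ Hw hy) as (c0 & c1 & nu & hu).
    destruct (dec (mul b c) zero) as [e1|e1].
    + rewrite (step_m0 b y u c) by auto; simpl.
      destruct (dec (mul a b) zero) as [e|e]. { rewrite e, step_0; reflexivity. }
      destruct (dec (mul a b) one) as [e2|e2].
      { exfalso; apply c0. rewrite <- (mul1l c), <- e2, <- mulA, e1, mul0r. reflexivity. }
      rewrite (step_m0 (mul a b) y u c) by (auto; rewrite <- mulA, e1, mul0r; reflexivity). reflexivity.
    + destruct (dec (mul b c) one) as [e1'|e1'].
      * rewrite (step_m1 b y u c) by auto; simpl.
        assert (E : mul (mul a b) c = a) by (rewrite <- mulA, e1', mul1r; reflexivity).
        destruct (dec a zero) as [->|a0]. { rewrite mul0l, !step_0. reflexivity. }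
        destruct (dec (mul a b) zero) as [e2|e2].
        { exfalso; apply a0. rewrite <- E, e2, mul0l. reflexivity. }
        destruct (dec (mul a b) one) as [e3|e3].
        { rewrite e3, mul1l in E. subst a. rewrite e3, step_1, step_nomerge by auto.
          rewrite (embproj y c hy). reflexivity. }
        destruct (dec a one) as [->|a1].
        { rewrite step_1, (step_m1 (mul one b) y u c) by auto. reflexivity. }
        rewrite (step_mp (mul a b) y u c) by (auto; rewrite E; auto). rewrite E, step_nomerge by auto. reflexivity.
      * rewrite (step_mp b y u c) by auto; simpl.
        destruct (dec a zero) as [->|a0]. { rewrite step_0, mul0l, step_0. reflexivity. }
        destruct (dec a one) as [->|a1]. { rewrite step_1, mul1l, (step_mp b y u c) by auto. reflexivity. }
        assert (E : mul a (mul b c) = mul (mul a b) c) by apply mulA.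
        destruct (dec (mul a b) zero) as [e2|e2].
        { rewrite e2, step_0. apply (step_m0 a _ _ (mul b c)); auto. rewrite E, e2, mul0l. reflexivity. }
        destruct (dec (mul a b) one) as [e5|e5].
        { rewrite e5, step_1. rewrite e5, mul1l in E.
          rewrite (step_mp a _ _ (mul b c)) by (auto; rewrite E; auto). rewrite E, (embproj y c hy). reflexivity. }
        destruct (dec (mul (mul a b) c) zero) as [e3|e3].
        { rewrite (step_m0 a _ _ (mul b c)) by (auto; rewrite E; auto).
          rewrite (step_m0 (mul a b) y u c) by auto. reflexivity. }
        destruct (dec (mul (mul a b) c) one) as [e4|e4].
        { rewrite (step_m1 a _ _ (mul b c)) by (auto; rewrite E; auto).
          rewrite (step_m1 (mul a b) y u c) by auto. reflexivity. }
        rewrite (step_mp a _ _ (mul b c)) by (auto; rewrite E; auto).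
        rewrite (step_mp (mul a b) y u c) by auto. rewrite E. reflexivity.
Qed.

Hypothesis canc : zero_left_cancellative A.

Lemma step_canc_aux a w c y u : a <> zero -> a <> one -> headok w -> nf (y :: u) -> proj y = Some c ->
  Some (emb a :: w) = step a (y :: u) -> False.
Proof.
  intros a0 a1 hw nyu hy E.
  destruct (H1 _ _ _ nyu hy) as (c0 & c1 & nu & hu).
  destruct (dec (mul a c) zero) as [e|e]. { rewrite (step_m0 a y u c) in E by auto. discriminate. }
  destruct (dec (mul a c) one) as [e'|e'].
  { rewrite (step_m1 a y u c) in E by auto. injection E as <-. simpl in hu. rewrite projemb in hu. discriminate. }
  rewrite (step_mp a y u c) in E by auto. injection E as E1 E2.
  apply emb_inj in E1. apply c1. apply (canc a); try rewrite mul1r; congruence.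
Qed.

Lemma step_canc a w w' : nf w -> nf w' -> step a w = step a w' -> step a w <> None -> w = w'.
Proof.
  intros nw nw' E ne.
  destruct (dec a zero) as [->|a0]. { rewrite step_0 in ne; congruence. }
  destruct (dec a one) as [->|a1]. { rewrite !step_1 in E; congruence. }
  destruct (head_cases w) as [hw | (y & u & c & -> & hy)];
  destruct (head_cases w') as [hw' | (y' & u' & c' & -> & hy')].
  - rewrite !step_nomerge in E by auto. congruence.
  - rewrite step_nomerge in E by auto. exfalso; eapply step_canc_aux; eauto.
  - rewrite (step_nomerge a w') in E by auto. exfalso; eapply step_canc_aux; eauto.
  - destruct (H1 _ _ _ nw hy) as (c0 & c1 & nu & hu).
    destruct (H1 _ _ _ nw' hy') as (c0' & c1' & nu' & hu').
    rewrite (embproj y c hy), (embproj y' c' hy') in *.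
    destruct (dec (mul a c) zero) as [e|e]. { rewrite (step_m0 a _ u c) in ne by auto. congruence. }
    destruct (dec (mul a c') zero) as [f|f]. { rewrite (step_m0 a _ u' c') in E by auto.
       rewrite <- E in ne. congruence. }
    destruct (dec (mul a c) one) as [e'|e'];
    destruct (dec (mul a c') one) as [f'|f'].
    + rewrite (step_m1 a _ u c), (step_m1 a _ u' c') in E by auto.
      injection E as ->. f_equal. f_equal. apply (canc a); congruence.
    + rewrite (step_m1 a _ u c), (step_mp a _ u' c') in E by auto.
      injection E as ->. simpl in hu. rewrite projemb in hu. discriminate.
    + rewrite (step_mp a _ u c), (step_m1 a _ u' c') in E by auto.
      injection E as <-. simpl in hu'. rewrite projemb in hu'. discriminate.
    + rewrite (step_mp a _ u c), (step_mp a _ u' c') in E by auto.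
      injection E as E1 ->. apply emb_inj in E1. f_equal. f_equal. apply (canc a); auto.
Qed.

Variable P : monoid0.
Variable i : L -> P.
Variable iota : A -> P.
Hypothesis hiota : hom0 iota.
Hypothesis iemb : forall a, i (emb a) = iota a.

Definition gw (w : list L) : P := fold_right (fun x acc => mul (i x) acc) one w.

Lemma step_g a w : match step a w with None => zero | Some w' => gw w' end = mul (iota a) (gw w).
Proof.
  destruct hiota as (hm & h1 & h0).
  destruct (dec a zero) as [->|a0]. { rewrite step_0, h0, mul0l. reflexivity. }
  destruct (dec a one) as [->|a1]. { rewrite step_1, h1, mul1l. reflexivity. }
  destruct (head_cases w) as [hw | (y & u & c & -> & hy)].
  - rewrite step_nomerge by auto. simpl. rewrite iemb. reflexivity.
  - simpl. rewrite (embproj y c hy), iemb, mulA, <- hm.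
    destruct (dec (mul a c) zero) as [e|e].
    { rewrite (step_m0 a _ u c) by auto. rewrite e, h0, mul0l. reflexivity. }
    destruct (dec (mul a c) one) as [e'|e'].
    { rewrite (step_m1 a _ u c) by auto. rewrite e', h1, mul1l. reflexivity. }
    rewrite (step_mp a _ u c) by auto. simpl. rewrite iemb. reflexivity.
Qed.

End Gen.

Section Conc.
Variables M N : monoid0.
Hypothesis ntM : nontrivial M.
Hypothesis ntN : nontrivial N.

Definition L := (M + N)%type.
Definition projM (y : L) : option M := match y with inl m => Some m | inr _ => None end.
Definition projN (y : L) : option N := match y with inr n => Some n | inl _ => None end.

Fixpoint nf (w : list L) : Prop :=
  match w with
  | [] => True
  | inl m :: w' => m <> zero /\ m <> one /\ nf w' /\ headok M L projM w'
  | inr n :: w' => n <> zero /\ n <> one /\ nf w' /\ headok N L projN w'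
  end.

Lemma pM1 : forall a, projM (inl a) = Some a. Proof. reflexivity. Qed.
Lemma pM2 : forall y a, projM y = Some a -> y = inl a. Proof. destruct y; simpl; congruence. Qed.
Lemma pN1 : forall a, projN (inr a) = Some a. Proof. reflexivity. Qed.
Lemma pN2 : forall y a, projN y = Some a -> y = inr a. Proof. destruct y; simpl; congruence. Qed.
Lemma HM1 : forall y w a, nf (y :: w) -> projM y = Some a ->
   a <> zero /\ a <> one /\ nf w /\ headok M L projM w.
Proof. destruct y; simpl; intros; [injection H0 as <-; tauto | discriminate]. Qed.
Lemma HN1 : forall y w a, nf (y :: w) -> projN y = Some a ->
   a <> zero /\ a <> one /\ nf w /\ headok N L projN w.
Proof. destruct y; simpl; intros; [discriminate | injection H0 as <-; tauto]. Qed.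
Lemma HM2 : forall a w, a <> zero -> a <> one -> nf w -> headok M L projM w -> nf (inl a :: w).
Proof. simpl; tauto. Qed.
Lemma HN2 : forall a w, a <> zero -> a <> one -> nf w -> headok N L projN w -> nf (inr a :: w).
Proof. simpl; tauto. Qed.

Definition consL (x : L) (o : option (list L)) : option (list L) :=
  match x with
  | inl m => stepO M L inl projM m o
  | inr n => stepO N L inr projN n o
  end.

Lemma consL_nf x o : nfo L nf o -> nfo L nf (consL x o).
Proof.
  destruct o as [w|]; [|destruct x; simpl; auto]. destruct x as [m|n]; simpl; intro.
  - apply (step_nf M L inl projM nf HM1 HM2); auto.
  - apply (step_nf N L inr projN nf HN1 HN2); auto.
Qed.

Definition NF := {o : option (list L) | nfo L nf o}.
Definition nNone : NF := exist _ None I.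
Definition nEmpty : NF := exist _ (Some []) I.
Definition act (x : L) (X : NF) : NF := exist _ (consL x (proj1_sig X)) (consL_nf x _ (proj2_sig X)).

Definition Qcar := {f : NF -> NF | f nNone = nNone}.
Definition Qmul (f g : Qcar) : Qcar.
Proof.
  exists (fun X => proj1_sig f (proj1_sig g X)).
  rewrite (proj2_sig g), (proj2_sig f). reflexivity.
Defined.
Definition Qone : Qcar := exist _ (fun X => X) eq_refl.
Definition Qzero : Qcar := exist _ (fun _ => nNone) eq_refl.

Lemma Qext (f g : Qcar) : (forall X, proj1_sig f X = proj1_sig g X) -> f = g.
Proof. intro H. apply sig_eq. apply functional_extensionality. exact H. Qed.

Definition Q : monoid0.
Proof.
  refine (@Monoid0 Qcar Qmul Qone Qzero _ _ _ _ _);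
    intros; apply Qext; intros; simpl; try reflexivity.
  apply (proj2_sig x).
Defined.

Lemma act_none x : act x nNone = nNone.
Proof. apply sig_eq. destruct x; reflexivity. Qed.
Definition actQ (x : L) : Q := exist _ (act x) (act_none x).

Definition fM (m : M) : Q := actQ (inl m).
Definition fN (n : N) : Q := actQ (inr n).

Lemma hom_fM : hom0 (M:=M) (N:=Q) fM.
Proof.
  split; [|split]; intros; apply Qext; intros [o Ho]; apply sig_eq; simpl;
  (destruct o as [w|]; [|reflexivity]); simpl.
  - symmetry. apply (step_comp M L inl projM pM1 pM2 ntM nf HM1); auto.
  - apply step_1; auto.
  - apply step_0.
Qed.
Lemma hom_fN : hom0 (M:=N) (N:=Q) fN.
Proof.
  split; [|split]; intros; apply Qext; intros [o Ho]; apply sig_eq; simpl;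
  (destruct o as [w|]; [|reflexivity]); simpl.
  - symmetry. apply (step_comp N L inr projN pN1 pN2 ntN nf HN1); auto.
  - apply step_1; auto.
  - apply step_0.
Qed.

Hypothesis cM : zero_left_cancellative M.
Hypothesis cN : zero_left_cancellative N.

Lemma act_canc x U V : act x U = act x V -> proj1_sig (act x U) <> None -> U = V.
Proof.
  intros E ne. apply (f_equal (@proj1_sig _ _)) in E. simpl in E, ne.
  destruct U as [o Ho], V as [o' Ho']; apply sig_eq; simpl in *.
  destruct o as [w|]; [|destruct x; simpl in *; congruence].
  destruct o' as [w'|]; [|destruct x; simpl in *; congruence].
  f_equal. destruct x as [m|n]; simpl in *.
  - apply (step_canc M L inl projM pM1 pM2 ntM nf HM1 cM m); auto.
  - apply (step_canc N L inr projN pN1 pN2 ntN nf HN1 cN n); auto.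
Qed.

Variable P : monoid0.
Variables (iM : M -> P) (iN : N -> P).
Hypothesis Hfp : is_zero_free_product iM iN.

Definition ii (x : L) : P := match x with inl m => iM m | inr n => iN n end.
Definition ev (l : list L) : P := gw L P ii l.

Lemma ev_app l1 l2 : ev (l1 ++ l2) = mul (ev l1) (ev l2).
Proof.
  induction l1; simpl. - rewrite mul1l; reflexivity.
  - unfold ev in *; simpl. rewrite IHl1, mulA. reflexivity.
Qed.

Definition Scar := {p : P | exists l, p = ev l}.
Definition Smul (x y : Scar) : Scar.
Proof.
  exists (mul (proj1_sig x) (proj1_sig y)).
  destruct (proj2_sig x) as [l1 e1], (proj2_sig y) as [l2 e2].
  exists (l1 ++ l2). rewrite ev_app, <- e1, <- e2. reflexivity.
Defined.
Definition Sone : Scar := exist _ one (ex_intro _ [] eq_refl).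
Lemma iM_ev m : iM m = ev [inl m].
Proof. unfold ev; simpl. rewrite mul1r. reflexivity. Qed.
Lemma iN_ev n : iN n = ev [inr n].
Proof. unfold ev; simpl. rewrite mul1r. reflexivity. Qed.
Definition Szero : Scar.
Proof.
  exists zero. exists [inl zero]. rewrite <- iM_ev.
  destruct Hfp as ((_&_&h)&_). auto.
Defined.
Definition S : monoid0.
Proof.
  refine (@Monoid0 Scar Smul Sone Szero _ _ _ _ _); intros; apply sig_eq; simpl.
  apply mulA. apply mul1l. apply mul1r. apply mul0l. apply mul0r.
Defined.
Definition sM (m : M) : S := exist _ (iM m) (ex_intro _ _ (iM_ev m)).
Definition sN (n : N) : S := exist _ (iN n) (ex_intro _ _ (iN_ev n)).

Lemma hom_comp (A B C : monoid0) (f : A -> B) (g : B -> C) :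
  hom0 f -> hom0 g -> hom0 (fun x => g (f x)).
Proof.
  intros (f1&f2&f3) (g1&g2&g3); split; [|split]; intros.
  rewrite f1, g1; auto. rewrite f2; auto. rewrite f3; auto.
Qed.
Lemma hom_id (A : monoid0) : hom0 (fun x : A => x).
Proof. split; [|split]; reflexivity. Qed.

Lemma gen p : exists l, p = ev l.
Proof.
  destruct Hfp as (hM & hN & U).
  assert (hsM : hom0 (M:=M) (N:=S) sM).
  { destruct hM as (a&b&c); split; [|split]; intros; apply sig_eq; simpl; auto. }
  assert (hsN : hom0 (M:=N) (N:=S) sN).
  { destruct hN as (a&b&c); split; [|split]; intros; apply sig_eq; simpl; auto. }
  destruct (U S sM sN hsM hsN) as (u & (hu & uM & uN) & _).
  destruct (U P iM iN hM hN) as (h0 & _ & uniq).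
  assert (hincl : hom0 (M:=S) (N:=P) (fun s => proj1_sig s)).
  { split; [|split]; reflexivity. }
  assert (E1 : h0 = fun p => proj1_sig (u p)).
  { apply uniq. split; [apply (hom_comp _ _ _ u (fun s : S => proj1_sig s)); auto|].
    split; intros; [rewrite uM|rewrite uN]; reflexivity. }
  assert (E2 : h0 = fun p => p).
  { apply uniq. split; [apply hom_id|]. split; reflexivity. }
  assert (E : p = proj1_sig (u p)).
  { pose proof (equal_f E1 p) as F1; pose proof (equal_f E2 p) as F2; simpl in *; congruence. }
  rewrite E. exact (proj2_sig (u p)).
Qed.

Definition gO (o : option (list L)) : P := match o with None => zero | Some w => ev w end.

Lemma gO_cons x o : gO (consL x o) = mul (ii x) (gO o).
Proof.
  destruct o as [w|]; simpl.
  - destruct Hfp as (hM & hN & _). destruct x as [m|n]; simpl.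
    + apply (step_g M L inl projM pM1 pM2 ntM P ii iM hM); reflexivity.
    + apply (step_g N L inr projN pN1 pN2 ntN P ii iN hN); reflexivity.
  - destruct x; symmetry; apply mul0r.
Qed.

Lemma left_canc : zero_left_cancellative P.
Proof.
  destruct Hfp as (hM & hN & U).
  destruct (U Q fM fN hom_fM hom_fN) as (h & ((h1&h2&h3) & hhM & hhN) & _).
  assert (hii : forall x, h (ii x) = actQ x).
  { destruct x; simpl; [apply hhM|apply hhN]. }
  assert (act_g : forall l X, gO (proj1_sig (proj1_sig (h (ev l)) X)) = mul (ev l) (gO (proj1_sig X))).
  { induction l as [|x l IH]; intros X.
    - unfold ev; simpl. rewrite h2, mul1l. reflexivity.
    - unfold ev; simpl. rewrite h1. simpl. rewrite hii. simpl. rewrite gO_cons.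
      fold (ev l). rewrite IH, mulA. reflexivity. }
  assert (gOev : forall p, gO (proj1_sig (proj1_sig (h p) nEmpty)) = p).
  { intro p. destruct (gen p) as [l ->]. rewrite act_g. simpl. apply mul1r. }
  assert (acanc : forall l X Y, proj1_sig (h (ev l)) X = proj1_sig (h (ev l)) Y ->
             proj1_sig (proj1_sig (h (ev l)) X) <> None -> X = Y).
  { induction l as [|x l IH]; intros X Y.
    - unfold ev; simpl. rewrite h2. simpl. auto.
    - unfold ev; simpl. rewrite h1. simpl. rewrite hii. simpl. fold (ev l).
      intros E ne. apply IH.
      + apply (act_canc x); auto.
      + intro e. apply ne. rewrite e. destruct x; reflexivity. }
  intros s t r E ne.
  destruct (gen s) as [l ->].
  assert (E' := f_equal (fun q => proj1_sig (h q) nEmpty) E). simpl in E'.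
  rewrite !h1 in E'. simpl in E'.
  assert (T : proj1_sig (h t) nEmpty = proj1_sig (h r) nEmpty).
  { apply (acanc l); auto. intro e. apply ne. rewrite <- (gOev (mul (ev l) t)), h1. simpl.
    rewrite e. reflexivity. }
  rewrite <- (gOev t), <- (gOev r), T. reflexivity.
Qed.

End Conc.

Definition opM (A : monoid0) : monoid0.
Proof.
  refine (@Monoid0 (car A) (fun x y => mul y x) one zero _ _ _ _ _); intros.
  symmetry; apply mulA. apply mul1r. apply mul1l. apply mul0r. apply mul0l.
Defined.

Lemma hom_op1 (A B : monoid0) (f : A -> B) : hom0 (M:=A) (N:=B) f -> hom0 (M:=opM A) (N:=opM B) f.
Proof. intros (a&b&c); split; [|split]; auto. intros; simpl; apply a. Qed.
Lemma hom_op2 (A B : monoid0) (f : A -> B) : hom0 (M:=opM A) (N:=B) f -> hom0 (M:=A) (N:=opM B) f.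
Proof. intros (a&b&c); split; [|split]; auto. intros; simpl; apply (a y x). Qed.
Lemma hom_op3 (A B : monoid0) (f : A -> B) : hom0 (M:=A) (N:=opM B) f -> hom0 (M:=opM A) (N:=B) f.
Proof. intros (a&b&c); split; [|split]; auto. intros; simpl; apply (a y x). Qed.

Lemma fp_op (M N P : monoid0) (iM : M -> P) (iN : N -> P) :
  is_zero_free_product iM iN -> @is_zero_free_product (opM M) (opM N) (opM P) iM iN.
Proof.
  intros (hM & hN & U). split; [apply hom_op1; auto|]. split; [apply hom_op1; auto|].
  intros Q f g hf hg.
  destruct (U (opM Q) f g (hom_op2 _ _ _ hf) (hom_op2 _ _ _ hg)) as (h & (hh & e1 & e2) & uq).
  exists h. split. { split; [apply hom_op3; auto| auto]. }
  intros h' (hh' & e1' & e2'). apply uq. split; [apply hom_op2; auto|auto].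
Qed.

Theorem theorem9p3 :
  (forall (M N P : monoid0) (iM : M -> P) (iN : N -> P),
      nontrivial M -> nontrivial N ->
      zero_left_cancellative M -> zero_left_cancellative N ->
      is_zero_free_product iM iN ->
      zero_left_cancellative P) /\
  (forall (M N P : monoid0) (iM : M -> P) (iN : N -> P),
      nontrivial M -> nontrivial N ->
      zero_right_cancellative M -> zero_right_cancellative N ->
      is_zero_free_product iM iN ->
      zero_right_cancellative P).
Proof.
  split.
  - intros M N P iM iN a b c d e. exact (left_canc M N a b c d P iM iN e).
  - intros M N P iM iN a b c d e.
    exact (left_canc (opM M) (opM N) a b c d (opM P) iM iN (fp_op _ _ _ _ _ e)).
Qed.
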